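(* Let $G$ be a finite simple connected graph and $G^*$ its twin graph. If $\beta(G^* )=n(G^* )-t$ for some positive integer $t$, then $\beta(G)\le n(G)-t$.
   Context: $n(X)$ is the number of vertices of $X$. For an ordered set $W=\{w_1,\dots,w_k\}$ of vertices of a connected graph $X$, $r(v|W)=(d(v,w_1),\dots,d(v,w_k))$ with $d$ the shortest-path distance; $W$ is resolving if distinct vertices have distinct vectors, and $\beta(X)$ is the minimum size of a resolving set. Two distinct vertices $u,v$ of $G$ are twins if $N(v)\setminus\{u\}=N(u)\setminus\{v\}$; $u\equiv v$ iff $u=v$ or they are twins, an equivalence relation with classes $v^*$. The twin graph $G^*$ has vertex set $\{v^*:v\in V(G)\}$ and $u^*v^*\in E(G^* )$ iff $uv\in E(G)$ (well defined). *)

(* Defs.v *)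
From mathcomp Require Import all_boot.
Set Implicit Arguments. Unset Strict Implicit. Unset Printing Implicit Defensive.

(* A graph is given by a finite type T, a vertex set V : {set T} and an
   adjacency relation e : rel T (only edges between vertices of V matter). *)
Section Graphs.
Variables (T : finType) (e : rel T) (V : {set T}).

Definition reach (u : T) (k : nat) : {set T} :=
  iter k (fun S => S :|: [set y in V | [exists x in S, e x y]]) [set u].

(* shortest-path distance d(u,v) (in a connected graph, < #|T|.+1) *)
Definition dist (u v : T) : nat :=
  find (fun k => v \in reach u k) (iota 0 #|T|.+1).

Definition resolving (W : {set T}) : bool :=
  (W \subset V) &&
  [forall u in V, forall v in V,
     [forall w in W, dist u w == dist v w] ==> (u == v)].

Definition metric_dim : nat :=
  \big[minn/#|V|]_(W : {set T} | resolving W) #|W|.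
End Graphs.

Definition simple_graph (T : finType) (e : rel T) : Prop :=
  symmetric e /\ irreflexive e.

Definition connected_graph (T : finType) (e : rel T) : Prop :=
  forall u v : T, connect e u v.

Definition twins (T : finType) (e : rel T) (u v : T) : bool :=
  (u != v) && ([set y | e v y] :\ u == [set y | e u y] :\ v).

Definition tclass (T : finType) (e : rel T) (v : T) : {set T} :=
  [set u | (u == v) || twins e u v].

Definition twin_vertices (T : finType) (e : rel T) : {set {set T}} :=
  [set tclass e v | v : T].

Definition twin_edge (T : finType) (e : rel T) : rel {set T} :=
  fun A B => (A != B) && [exists u in A, exists v in B, e u v].

(* Main.v *)
Require Import Defs.
From mathcomp Require Import all_boot zify.
Set Implicit Arguments. Unset Strict Implicit. Unset Printing Implicit Defensive.

Section Generic.
Variables (T : finType) (e : rel T) (V : {set T}).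

Lemma reachS u k : reach e V u k.+1 =
  reach e V u k :|: [set y in V | [exists x in reach e V u k, e x y]].
Proof. by []. Qed.

Lemma reach0 u : reach e V u 0 = [set u].
Proof. by []. Qed.

Lemma reach_mono u k j : reach e V u k \subset reach e V u (k + j).
Proof.
elim: j => [|j IH]; first by rewrite addn0.
rewrite addnS reachS; apply: subset_trans IH _; exact: subsetUl.
Qed.

Lemma reach_sub u k : reach e V u k \subset u |: V.
Proof.
elim: k => [|k IH]; first by rewrite reach0 sub1set setU11.
rewrite reachS subUset IH /=; apply/subsetP => y; rewrite inE => /andP[yV _].
by rewrite setU1r.
Qed.

Lemma reach_fix u i j : reach e V u i.+1 = reach e V u i ->
  reach e V u (i + j) = reach e V u i.
Proof.
move=> H; elim: j => [|j IH]; first by rewrite addn0.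
by rewrite addnS reachS IH -reachS H.
Qed.

Lemma reach_grow u k : (exists2 i, i <= k & reach e V u i.+1 = reach e V u i)
   \/ k < #|reach e V u k|.
Proof.
elim: k => [|k [[i ik Hi]|IH]].
- by right; rewrite reach0 cards1.
- by left; exists i => //; exact: leqW.
- case: (reach e V u k.+1 =P reach e V u k) => H.
  + by left; exists k.
  + right.
    have sub : reach e V u k \subset reach e V u k.+1 by rewrite reachS subsetUl.
    have : reach e V u k \proper reach e V u k.+1.
      rewrite properEneq sub andbT; apply/eqP => E; exact: H (esym E).
    move/proper_card => lt; exact: leq_ltn_trans IH lt.
Qed.

Lemma reach_stab u m : reach e V u m \subset reach e V u #|T|.
Proof.
case: (reach_grow u #|T|) => [[i iT Hi]|H]; last first.
  by have := max_card (reach e V u #|T|); rewrite leqNgt H.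
case: (leqP i m) => im.
- rewrite -(subnKC im) reach_fix //. rewrite -(subnKC iT); exact: reach_mono.
- rewrite -(subnKC (ltnW (leq_trans im iT))); exact: reach_mono.
Qed.

Lemma dist_find u v : dist e V u v = find (fun k => v \in reach e V u k) (iota 0 #|T|.+1).
Proof. by []. Qed.

Lemma dist0 u v : dist e V u v = 0 -> u = v.
Proof.
rewrite dist_find /= !inE; case: (v =P u) => // ->.
Qed.

Lemma dist_self u : dist e V u u = 0.
Proof. by rewrite dist_find /= !inE eqxx. Qed.

End Generic.

Lemma find_transfer (P Q : pred nat) n N :
  n <= N -> (forall m, P m -> P n) -> (forall m, Q m -> Q n) ->
  find P (iota 0 n.+1) = find Q (iota 0 n.+1) ->
  find P (iota 0 N.+1) = find Q (iota 0 N.+1).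
Proof.
move=> nN sP sQ E.
have -> : N.+1 = n.+1 + (N - n) by rewrite addSn subnKC.
have hPQ : has P (iota 0 n.+1) = has Q (iota 0 n.+1) by rewrite !has_find E.
rewrite !iotaD !find_cat hPQ; case: ifP => // hQ.
have nP : ~~ P n.
  apply/negP => Pn; move: hQ; rewrite -hPQ; move/negbT/hasPn/(_ n).
  by rewrite mem_iota leq0n add0n ltnSn Pn => /(_ isT).
have nQ : ~~ Q n.
  apply/negP => Qn; move: hQ; move/negbT/hasPn/(_ n).
  by rewrite mem_iota leq0n add0n ltnSn Qn => /(_ isT).
rewrite !hasNfind //; apply/hasPn => m _; apply/negP.
- by move/sQ; apply/negP.
- by move/sP; apply/negP.
Qed.

Section Twins.
Variables (T : finType) (e : rel T).
Hypotheses (sym : symmetric e) (irr : irreflexive e).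

Definition teq u v := (u == v) || twins e u v.

Lemma twinsP u v : reflect (u != v /\ forall z, z != u -> z != v -> e v z = e u z)
  (twins e u v).
Proof.
rewrite /twins; apply: (iffP andP) => [[uv /eqP E]|[uv H]]; split => //.
- move=> z zu zv; move/setP: E => /(_ z); by rewrite !inE zu zv.
- apply/eqP/setP => z; rewrite !inE.
  case: (eqVneq z u) => [->|zu]; first by rewrite ?eqxx ?irr ?andbF.
  case: (eqVneq z v) => [->|zv]; first by rewrite ?eqxx ?irr ?andbF.
  by rewrite /= H.
Qed.

Lemma teq_refl u : teq u u.
Proof. by rewrite /teq eqxx. Qed.

Lemma twins_sym u v : twins e u v -> twins e v u.
Proof.
move/twinsP => [uv H]; apply/twinsP; split; first by rewrite eq_sym.
by move=> z zv zu; rewrite H.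
Qed.

Lemma teq_sym u v : teq u v -> teq v u.
Proof.
by rewrite /teq => /orP[/eqP->|/twins_sym->]; rewrite ?eqxx ?orbT.
Qed.

Lemma teq_trans u v w : teq u v -> teq v w -> teq u w.
Proof.
rewrite /teq => /orP[/eqP->//|uv] /orP[/eqP<-|vw]; first by rewrite uv orbT.
case: (eqVneq u w) => //= uw.
move/twinsP: uv => [uv Huv]; move/twinsP: vw => [vw Hvw].
apply/twinsP; split => // z zu zw.
case: (eqVneq z v) => [->|zv].
- have wv : w != v by rewrite eq_sym.
  have wu : w != u by rewrite eq_sym.
  by rewrite sym (Huv w wu wv) -(sym w u) (Hvw u uv uw) sym.
- by rewrite (Hvw z zv zw) (Huv z zu zv).
Qed.

Lemma tclassE u v : (u \in tclass e v) = teq u v.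
Proof. by rewrite inE. Qed.

Lemma tclass_self v : v \in tclass e v.
Proof. by rewrite tclassE teq_refl. Qed.

Lemma tclass_eq y v : y \in tclass e v -> tclass e y = tclass e v.
Proof.
rewrite tclassE => yv; apply/setP => u; rewrite !tclassE.
apply/idP/idP => h; first exact: teq_trans h yv.
exact: teq_trans h (teq_sym yv).
Qed.

Lemma tclass_eqP x y : (tclass e x == tclass e y) = teq x y.
Proof.
apply/eqP/idP => [E|h]; first by rewrite -tclassE -E tclass_self.
by apply: tclass_eq; rewrite tclassE.
Qed.

Lemma adj_class u u' v : teq u u' -> ~~ teq u v -> e u v -> e u' v.
Proof.
rewrite /teq => /orP[/eqP<-//|tw] nuv euv.
move/twinsP: (tw) => [uu' H].
have vu : v != u by apply: contra nuv => /eqP->; rewrite eqxx.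
have vu' : v != u' by apply: contra nuv => /eqP->; rewrite tw orbT.
by rewrite H.
Qed.


Lemma reach_twin x y y' k : teq y y' -> ~~ teq y x ->
  y' \in reach e setT x k -> y \in reach e setT x k.
Proof.
move=> yy' nyx; elim: k => [|k IH].
  by rewrite reach0 inE => /eqP Ey'; move: nyx; rewrite -Ey' yy'.
rewrite !reachS !inE => /orP[/IH ->//|].
move=> /andP[_ /existsP[z /andP[zr ezy']]].
apply/orP.
case: (eqVneq z y) => [<-|zy]; first by left.
right; apply/existsP; exists z; rewrite zr /=.
move: yy'; rewrite /teq => /orP[/eqP->//|/twinsP[_ H]].
have zy' : z != y' by apply: contraTneq ezy' => ->; rewrite irr.
by rewrite sym -H // sym.
Qed.

Lemma tclassV y : tclass e y \in twin_vertices e.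
Proof. by apply/imsetP; exists y. Qed.

Lemma reach_star x k y :
  (tclass e y \in reach (twin_edge e) (twin_vertices e) (tclass e x) k)
  = [exists y' in tclass e y, y' \in reach e setT x k].
Proof.
elim: k y => [|k IH] y.
  rewrite reach0 inE; apply/eqP/existsP => [E|[y' /andP[y'y]]].
    by exists x; rewrite reach0 inE eqxx andbT E tclass_self.
  rewrite reach0 inE => /eqP Ey'; subst y'.
  by rewrite (tclass_eq y'y).
rewrite {1}reachS in_setU IH; apply/idP/idP.
- case/orP => [/existsP[y' /andP[y'y y'r]]|].
    by apply/existsP; exists y'; rewrite y'y reachS inE y'r.
  rewrite inE => /andP[_ /existsP[Z /andP[Zr]]].
  rewrite /twin_edge => /andP[ZCy /existsP[u /andP[uZ /existsP[v /andP[vy euv]]]]].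
  have : Z \in twin_vertices e.
    have := subsetP (reach_sub (twin_edge e) (twin_vertices e) (tclass e x) k) Z Zr.
    by case/setU1P => [->|//]; exact: tclassV.
  move=> /imsetP[z _ EZ]; subst Z.
  move: (IH z); rewrite Zr => /esym/existsP[z' /andP[z'z z'r]].
  apply/existsP; exists v; rewrite vy reachS !inE /=; apply/orP; right.
  apply/existsP; exists z'; rewrite z'r /=.
  apply: (adj_class _ _ euv).
    by apply: (teq_trans (v:=z)); [rewrite -tclassE | apply: teq_sym; rewrite -tclassE].
  rewrite -tclass_eqP (tclass_eq uZ) (tclass_eq vy).
  exact: ZCy.
- case/existsP => y' /andP[y'y]; rewrite reachS !inE => /orP[y'r|].
    by apply/orP; left; apply/existsP; exists y'; rewrite y'y.
  move=> /existsP[z /andP[zr ezy']].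
  have Cz : tclass e z \in reach (twin_edge e) (twin_vertices e) (tclass e x) k.
    by rewrite IH; apply/existsP; exists z; rewrite tclass_self.
  case: (eqVneq (tclass e z) (tclass e y)) => [E|ne].
    by apply/orP; left; apply/existsP; exists z; rewrite -E tclass_self.
  apply/orP; right; rewrite tclassV /=; apply/existsP; exists (tclass e z).
  rewrite Cz /twin_edge ne /=; apply/existsP; exists z; rewrite tclass_self /=.
  by apply/existsP; exists y'; rewrite y'y.
Qed.

Lemma reach_G_star x w k : ~~ teq w x ->
  (w \in reach e setT x k) =
  (tclass e w \in reach (twin_edge e) (twin_vertices e) (tclass e x) k).
Proof.
move=> nwx; rewrite reach_star; apply/idP/existsP => [h|[w' /andP[w'w r]]].
  by exists w; rewrite tclass_self.
by apply: (reach_twin (y':=w')) => //; apply: teq_sym; rewrite -tclassE.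
Qed.

Lemma dist_transfer x y w : ~~ teq w x -> ~~ teq w y ->
  dist e setT x w = dist e setT y w ->
  dist (twin_edge e) (twin_vertices e) (tclass e x) (tclass e w) =
  dist (twin_edge e) (twin_vertices e) (tclass e y) (tclass e w).
Proof.
move=> nx ny; rewrite !dist_find => E.
rewrite (eq_find (a2 := fun k => w \in reach e setT x k)); last first.
  by move=> k /=; rewrite reach_G_star.
rewrite [RHS](eq_find (a2 := fun k => w \in reach e setT y k)); last first.
  by move=> k /=; rewrite reach_G_star.
apply: (find_transfer _ _ _ E).
- by have h := @leq_card _ _ _ (@set1_inj T); apply: leq_trans h _.
- by move=> m; apply: (subsetP (reach_stab _ _ _ _)).
- by move=> m; apply: (subsetP (reach_stab _ _ _ _)).
Qed.

End Twins.

Lemma big_minn_le (I : finType) (P : pred I) (F : I -> nat) idx x :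
  P x -> \big[minn/idx]_(i | P i) F i <= F x.
Proof.
move=> Px; rewrite -big_filter.
have : x \in filter P (index_enum I) by rewrite mem_filter Px mem_index_enum.
elim: (filter P _) => [//|y s IH]; rewrite big_cons in_cons.
case/orP => [/eqP<-|/IH h]; first exact: geq_minl.
exact: leq_trans (geq_minr _ _) h.
Qed.

Theorem proposition2p8 (T : finType) (e : rel T) (t : nat) :
  simple_graph e -> connected_graph e -> 0 < t ->
  metric_dim (twin_edge e) (twin_vertices e) + t = #|twin_vertices e| ->
  metric_dim e [set: T] + t <= #|T|.
Proof.
move=> [sym irr] _ t0 Hdim.
set Vs := twin_vertices e in Hdim *.
have [Ws [HWs cWs]] : exists Ws, resolving (twin_edge e) Vs Ws /\
    #|Ws| = metric_dim (twin_edge e) Vs.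
  pose K m := m = #|Vs| \/ exists Ws, resolving (twin_edge e) Vs Ws /\ #|Ws| = m.
  have : K (metric_dim (twin_edge e) Vs).
    rewrite /metric_dim; apply: big_ind => [|a b Ka Kb|W HW]; [by left| |by right; exists W].
    by rewrite /minn; case: ifP.
  case => [E|//]; exfalso; lia.
have : 0 < #|Vs| by lia.
case/card_gt0P => c0 /imsetP[x0 _ _].
pose g (c : {set T}) := odflt x0 [pick y in c].
have gP : forall c, c \in Vs -> g c \in c /\ tclass e (g c) = c.
  move=> c /imsetP[v _ ->]; rewrite /g; case: pickP => [y yc|/(_ v)].
    by split => //=; rewrite (tclass_eq sym irr yc).
  by rewrite tclass_self.
have WsV : Ws \subset Vs by case/andP: HWs.
pose R := g @: (Vs :\: Ws).
have cR : #|R| = #|Vs| - #|Ws|.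
  rewrite card_in_imset ?cardsD ?(setIidPr WsV) //.
  move=> c1 c2 /setDP[c1V _] /setDP[c2V _] E.
  by rewrite -(gP c1 c1V).2 E (gP c2 c2V).2.
have RP : forall y, y \in R -> tclass e y \notin Ws /\ g (tclass e y) = y.
  move=> y /imsetP[c /setDP[cV cW] ->].
  by rewrite (gP c cV).2.
pose W := ~: R.
have resW : resolving e setT W.
  rewrite /resolving subsetT /=; apply/forallP => u; apply/implyP => _.
  apply/forallP => v; apply/implyP => _; apply/implyP => /forallP Hd.
  have Hd' : forall w, w \notin R -> dist e setT u w = dist e setT v w.
    by move=> w wR; move: (Hd w); rewrite inE wR => /eqP.
  case: (boolP (u \in R)) => uR; last first.
    by move: (Hd' u uR); rewrite dist_self => /esym/dist0->.
  case: (boolP (v \in R)) => vR; last first.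
    by move: (Hd' v vR); rewrite dist_self => /dist0->.
  case: (boolP (teq e u v)) => tuv.
    move: tuv; rewrite -tclass_eqP // => /eqP E.
    by rewrite -(RP u uR).2 E (RP v vR).2.
  have : ~~ [forall w in Ws, dist (twin_edge e) Vs (tclass e u) w ==
                             dist (twin_edge e) Vs (tclass e v) w].
    move: HWs => /andP[_ /forallP/(_ (tclass e u))].
    rewrite (tclassV e u) /= => /forallP/(_ (tclass e v)).
    rewrite (tclassV e v) /= => /implyP H; apply/negP => /H.
    by rewrite tclass_eqP // (negbTE tuv).
  case/forallPn => c; rewrite negb_imply => /andP[cW neqd].
  have [gc Cg] := gP c (subsetP WsV c cW).
  have gR : g c \notin R.
    by apply/negP => /RP[]; rewrite Cg cW.
  have nu : ~~ teq e (g c) u.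
    apply/negP; rewrite -tclass_eqP // Cg => /eqP E.
    by move: (RP u uR).1; rewrite -E cW.
  have nv : ~~ teq e (g c) v.
    apply/negP; rewrite -tclass_eqP // Cg => /eqP E.
    by move: (RP v vR).1; rewrite -E cW.
  have := dist_transfer sym irr nu nv (Hd' _ gR).
  by rewrite Cg => E; move: neqd; rewrite E eqxx.
have le : metric_dim e [set: T] <= #|W|.
  exact: (big_minn_le _ _ resW).
have := cardsC R; rewrite -/W => cW.
lia.
Qed.
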